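(* For every integer $m\ge2$, the Bernoulli numbers satisfy $$B_{2m}=\frac{-1}{(m+1)(2m+1)}\sum_{j=m-\lfloor m/2\rfloor}^{m-1}\binom{m+1}{2m-2j+1}(1+2j)\,B_{2j}.$$
   Context: $B_m$ denotes the Bernoulli numbers, defined by $\frac{t}{e^t-1}=\sum_{m\ge0}B_m\frac{t^m}{m!}$ (so $B_2=1/6$, $B_4=-1/30$). *)

(* Defs.v *)
From HB Require Import structures.
From mathcomp Require Import all_boot all_order all_algebra.
Set Implicit Arguments. Unset Strict Implicit. Unset Printing Implicit Defensive.
Import Order.TTheory GRing.Theory Num.Theory.
Local Open Scope ring_scope.

(* Generating function t/(e^t-1) = sum_m B_m t^m/m!.  Writing b_m = B_m/m!,
   the defining identity ((e^t-1)/t) * (sum_m b_m t^m) = 1 of formal power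
   series reads, coefficientwise,  sum_{k<=n} b_k / (n+1-k)! = [n = 0],
   i.e. b_0 = 1 and b_n = - sum_{k<n} b_k / (n+1-k)! for n >= 1.
   bern_seq n = [:: b_0; ...; b_n]. *)
Fixpoint bern_seq (n : nat) : seq rat :=
  match n with
  | 0 => [:: 1]
  | n'.+1 =>
      let s := bern_seq n' in
      rcons s (- \sum_(k < n'.+1) s`_k / ((n'.+2 - k)`!)%:R)
  end.

(* Bernoulli number B_n (so B_1 = -1/2, B_2 = 1/6, B_4 = -1/30). *)
Definition bernoulli (n : nat) : rat := (n`!)%:R * (bern_seq n)`_n.

(* Main.v *)
Require Import Defs.
From HB Require Import structures.
From mathcomp Require Import all_boot all_order all_algebra ring lra zify.
Import Order.TTheory GRing.Theory Num.Theory.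
Local Open Scope ring_scope.
Notation B := bernoulli.
Definition bb (k : nat) : rat := (bern_seq k)`_k.

Lemma size_bern n : size (bern_seq n) = n.+1.
Proof. by elim: n => [|n IH] //=; rewrite size_rcons IH. Qed.

Lemma bern_seq_nth n k : (k <= n)%N -> (bern_seq n)`_k = bb k.
Proof.
elim: n => [|n IH]; first by rewrite leqn0 => /eqP ->.
rewrite leq_eqVlt => /orP [/eqP -> //| Hk].
by rewrite /= nth_rcons size_bern Hk IH.
Qed.

Lemma bbS n : bb n.+1 = - \sum_(k < n.+1) bb k / ((n.+2 - k)`!)%:R.
Proof.
rewrite /bb /= nth_rcons size_bern ltnn eqxx; congr (- _).
by apply: eq_bigr => k _; rewrite bern_seq_nth // -ltnS.
Qed.

Lemma bernE k : bernoulli k = (k`!)%:R * bb k.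
Proof. by []. Qed.

Lemma bern_rec N : \sum_(k < N) ('C(N, k))%:R * bernoulli k = (N == 1%N)%:R.
Proof.
case: N => [|N]; first by rewrite big_ord0.
case: N => [|n]; first by rewrite big_ord1 /bernoulli /bb /=; rewrite mulr1.
rewrite /=.
have H := bbS n.
have : \sum_(k < n.+2) bb k / ((n.+2 - k)`!)%:R = 0.
  rewrite big_ord_recr /= H; have -> : (n.+2 - n.+1 = 1)%N by rewrite subSS subSnn.
  by rewrite divr1 addrN.
move=> /(congr1 (fun x => (n.+2)`!%:R * x)); rewrite mulr0 mulr_sumr => E; rewrite -[RHS]E.
apply: eq_bigr => k _; rewrite /bernoulli bern_seq_nth //.
have Hk : (k <= n.+2)%N by apply: ltnW.
have := bin_fact Hk => /(congr1 (fun x : nat => x%:R : rat)).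
rewrite !natrM => <-.
have h1 : ((n.+2 - k)`!)%:R != 0 :> rat by rewrite pnatr_eq0 -lt0n fact_gt0.
by field.
Qed.


Definition L (p : {poly rat}) : rat := \sum_(i < size p) p`_i * B i.

Lemma L_wide (p : {poly rat}) n : (size p <= n)%N -> L p = \sum_(i < n) p`_i * B i.
Proof.
move=> Hn; rewrite /L (big_ord_widen n (fun i => p`_i * B i) Hn) big_mkcond /=.
apply: eq_bigr => i _; case: ifP => // /negbT; rewrite -leqNgt => H.
by rewrite nth_default // mul0r.
Qed.

Definition linF (F : {poly rat} -> rat) :=
  (forall p q, F (p + q) = F p + F q) /\ (forall c p, F (c *: p) = c * F p).

Lemma linF0 F : linF F -> F 0 = 0.
Proof. by case=> _ HZ; rewrite -(scale0r 0) HZ mul0r. Qed.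

Lemma linF_sum F (I : Type) (r : seq I) (P : I -> {poly rat}) : linF F ->
  F (\sum_(i <- r) P i) = \sum_(i <- r) F (P i).
Proof.
move=> HF; elim: r => [|a r IH]; first by rewrite !big_nil linF0.
by rewrite !big_cons (proj1 HF) IH.
Qed.

Lemma linF_Mn F p k : linF F -> F (p *+ k) = k%:R * F p.
Proof. by case=> _ HZ; rewrite -scaler_nat HZ. Qed.

Lemma linF_N F p : linF F -> F (- p) = - F p.
Proof. by case=> _ HZ; rewrite -scaleN1r HZ mulN1r. Qed.

Lemma linF_comp F p q : linF F ->
  F (p \Po q) = \sum_(i < size p) p`_i * F (q ^+ i).
Proof.
move=> HF; rewrite comp_polyE linF_sum //; apply: eq_bigr => i _.
by rewrite (proj2 HF).
Qed.

Lemma lin_ext {F G} : linF F -> linF G -> (forall i, F 'X^i = G 'X^i) ->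
  forall p, F p = G p.
Proof.
move=> HF HG H p; rewrite -(comp_polyXr p) !linF_comp //.
by apply: eq_bigr => i _; rewrite H.
Qed.

Lemma L_lin : linF L.
Proof.
split.
- move=> p q; set n := maxn (size p) (size q).
  rewrite (L_wide (p + q) n) ?size_polyD // (L_wide p n) ?leq_maxl //.
  rewrite (L_wide q n) ?leq_maxr // -big_split /=.
  by apply: eq_bigr => i _; rewrite coefD mulrDl.
- move=> c p; rewrite (L_wide (c *: p) (size p)) ?size_scale_leq // /L mulr_sumr.
  by apply: eq_bigr => i _; rewrite coefZ -mulrA.
Qed.

Lemma L_Xn i : L 'X^i = B i.
Proof.
rewrite /L size_polyXn big_ord_recr /= coefXn eqxx mul1r big1 ?add0r //.
by move=> j _; rewrite coefXn (ltn_eqF (ltn_ord j)) mul0r.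
Qed.

Lemma linF_shift F N : linF F ->
  F (('X + 1) ^+ N) = \sum_(k < N.+1) ('C(N, k))%:R * F 'X^k.
Proof.
move=> HF; rewrite exprD1n linF_sum //; apply: eq_bigr => k _.
by rewrite linF_Mn.
Qed.

Lemma L_A u : L (u \Po ('X + 1)) - L u = u`_1.
Proof.
pose F u := L (u \Po ('X + 1)) - L u.
pose G (u : {poly rat}) := u`_1.
have HF : linF F.
  split=> [p q|c p]; rewrite /F.
    rewrite comp_polyD !(proj1 L_lin); ring.
  rewrite comp_polyZ !(proj2 L_lin); ring.
have HG : linF G by split=> [p q|c p]; rewrite /G ?coefD ?coefZ.
suff H : forall i, F ('X^i) = G ('X^i) by exact: (lin_ext HF HG H u).
move=> i.
rewrite /F /G comp_Xn_poly linF_shift; last exact: L_lin.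
rewrite big_ord_recr /= L_Xn binn mul1r addrK coefXn.
rewrite (eq_bigr (fun k : 'I_i => ('C(i, k))%:R * B k)); last by move=> k _; rewrite L_Xn.
by rewrite bern_rec eq_sym.
Qed.

Lemma coefN1 (u : {poly rat}) : (u \Po (- 'X))`_1 = - u`_1.
Proof.
pose F (u : {poly rat}) := (u \Po (- 'X))`_1.
pose G (u : {poly rat}) := - u`_1.
have HF : linF F by split=> [p q|c p]; rewrite /F ?comp_polyD ?comp_polyZ ?coefD ?coefZ.
have HG : linF G by split=> [p q|c p]; rewrite /G ?coefD ?coefZ; ring.
suff H : forall i, F ('X^i) = G ('X^i) by exact: (lin_ext HF HG H u).
move=> i; rewrite /F /G comp_Xn_poly exprNn -signr_odd.
case: (boolP (odd i)) => Ho /=; rewrite ?expr1 ?expr0 ?mulN1r ?mul1r ?coefN !coefXn //.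
case: eqP => [Ei|]; last by rewrite oppr0.
by move: Ho; rewrite -Ei.
Qed.

Lemma comp_polyNl (p q : {poly rat}) : (- p) \Po q = - (p \Po q).
Proof. by rewrite -(scaleN1r p) comp_polyZ scaleN1r. Qed.

Definition M (u : {poly rat}) := L (u \Po (- 'X - 1)).

Lemma M_lin : linF M.
Proof.
split=> [p q|c p]; rewrite /M ?comp_polyD ?comp_polyZ.
  exact: (proj1 L_lin).
exact: (proj2 L_lin).
Qed.

Lemma M_A u : M (u \Po ('X + 1)) - M u = u`_1.
Proof.
rewrite /M -comp_polyA comp_polyD comp_polyX comp_polyC.
have -> : - 'X - 1 + 1%:P = - 'X :> {poly rat} by rewrite polyC1 subrK.
have -> : - 'X - 1 = (- 'X) \Po ('X + 1) :> {poly rat}.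
  by rewrite comp_polyNl comp_polyX opprD.
rewrite comp_polyA.
have := L_A (u \Po - 'X); rewrite coefN1 => E; rewrite -[u`_1]opprK -E; ring.
Qed.

Lemma uniqF F : linF F -> (forall u, F (u \Po ('X + 1)) - F u = u`_1) ->
  forall N, F 'X^N = B N.
Proof.
move=> HF HA N; elim: N {-2}N (leqnn N) => [|N IH] k Hk.
  move: Hk; rewrite leqn0 => /eqP ->.
  have := HA 'X; rewrite comp_polyX (proj1 HF) coefX /= => E.
  rewrite expr0 (_ : B 0 = 1) //; lra.
rewrite leq_eqVlt in Hk; case/orP: Hk => [/eqP ->|]; last by apply: IH.
have := HA 'X^(N.+2); rewrite comp_Xn_poly linF_shift // big_ord_recr /= binn mul1r addrK.
rewrite coefXn /= => E.
have := bern_rec N.+2; rewrite /= -E big_ord_recr /= [in RHS]big_ord_recr /=.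
have S : \sum_(k < N.+1) ('C(N.+2, k))%:R * F 'X^k = \sum_(k < N.+1) ('C(N.+2, k))%:R * B k.
  by apply: eq_bigr => j _; rewrite IH // -ltnS.
rewrite S binSn => /addrI H.
have Hn : (N.+2)%:R != 0 :> rat by rewrite pnatr_eq0.
exact: (mulfI Hn (esym H)).
Qed.

Lemma M_Xn N : M 'X^N = B N.
Proof. exact: (uniqF M M_lin M_A N). Qed.

Lemma L_sym u : L (u \Po (- 'X - 1)) = L u.
Proof.
have H := lin_ext M_lin L_lin (fun i => etrans (M_Xn i) (esym (L_Xn i))).
exact: H.
Qed.

Lemma B_odd N : odd N -> N != 1%N -> B N = 0.
Proof.
move=> Ho H1.
have := L_sym 'X^N; rewrite comp_Xn_poly L_Xn.
have -> : - 'X - 1 = - ('X + 1) :> {poly rat} by rewrite opprD.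
rewrite exprNn -signr_odd Ho expr1 mulN1r linF_N; last exact: L_lin.
rewrite linF_shift; last exact: L_lin.
rewrite big_ord_recr /= binn mul1r L_Xn.
rewrite (eq_bigr (fun k : 'I_N => ('C(N, k))%:R * B k)); last by move=> k _; rewrite L_Xn.
rewrite bern_rec (negbTE H1) add0r => E.
have : 2 * B N = 0 by lra.
by move/eqP; rewrite mulf_eq0 pnatr_eq0 /= => /eqP.
Qed.

Lemma comp_polyXn (p r : {poly rat}) n : (p ^+ n) \Po r = (p \Po r) ^+ n.
Proof.
elim: n => [|n IH]; first by rewrite !expr0 comp_polyC.
by rewrite !exprS comp_polyM IH.
Qed.

Lemma key n : \sum_(k < n.+1) ('C(n, k))%:R * ((n + k)%:R * B (n + k).-1) = 0.
Proof.
pose r : {poly rat} := - 'X - 1.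
pose q : {poly rat} := 'X^n * ('X + 1) ^+ n.
have Hq : q \Po r = q.
  rewrite /q comp_polyM comp_Xn_poly comp_polyXn comp_polyD comp_polyX comp_polyC.
  rewrite -!exprMn; congr (_ ^+ _); rewrite /r polyC1; ring.
have Hr : r^`() = -1 by rewrite /r derivB derivN derivX derivC subr0.
have Hd : q^`() \Po r = - q^`().
  have := deriv_comp q r; rewrite Hq Hr => E.
  by rewrite [in RHS]E mulrN1 opprK.
have L0 : L q^`() = 0.
  have := L_sym q^`(); rewrite -/r Hd linF_N; last exact: L_lin.
  lra.
have Eq : q = \sum_(k < n.+1) 'X^(n + k) *+ 'C(n, k).
  rewrite /q exprD1n mulr_sumr; apply: eq_bigr => k _.
  by rewrite mulrnAr exprD.
rewrite -[RHS]L0 Eq raddf_sum linF_sum; last exact: L_lin.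
apply: eq_bigr => k _.
rewrite /= derivMn derivXn (linF_Mn _ _ _ L_lin) (linF_Mn _ _ _ L_lin) L_Xn.
by rewrite mulrA.
Qed.

Lemma pair_sum (h : nat -> rat) N :
  \sum_(i < 2 * N) h i = \sum_(j < N) (h (2 * j)%N + h (2 * j).+1).
Proof.
elim: N => [|N IH]; first by rewrite muln0 !big_ord0.
rewrite (_ : (2 * N.+1 = (2 * N).+2)%N); last by lia.
by rewrite !big_ord_recr /= IH addrA.
Qed.

Theorem mainTheorem5 (m : nat) (hm : (2 <= m)%N) :
  bernoulli (2 * m) =
    - 1 / ((m.+1)%:R * (2 * m).+1%:R) *
      \sum_(m - m./2 <= j < m)
        ('C(m.+1, (2 * m - 2 * j).+1))%:R * (1 + 2 * j)%:R * bernoulli (2 * j).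
Proof.
pose h (i : nat) : rat :=
  if (m <= i)%N then ('C(m.+1, i - m))%:R * (i.+1)%:R * B i else 0.
have K := key m.+1.
have Ea : \sum_(k < m.+2) ('C(m.+1, k))%:R * ((m.+1 + k)%:R * B (m.+1 + k).-1)
          = \sum_(i < m + m.+2) h i.
  symmetry; rewrite big_split_ord /= big1 ?add0r; last first.
    by move=> i _; rewrite /h /= leqNgt ltn_ord.
  apply: eq_bigr => k _; rewrite /h /= leq_addr addKn addSn /=.
  by rewrite mulrA.
rewrite Ea (_ : (m + m.+2 = 2 * m.+1)%N) in K; last by lia.
rewrite pair_sum in K.
rewrite (eq_bigr (fun j : 'I_m.+1 => h (2 * j)%N)) in K; last first.
  move=> j _; rewrite [h (2 * j).+1]/h; case: ifP => Hj; last by rewrite addr0.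
  rewrite B_odd ?mulr0 ?addr0 //.
    by rewrite /= oddM.
  by apply/eqP; lia.
rewrite -(big_mkord xpredT (fun j => h (2 * j)%N)) in K.
rewrite (big_cat_nat _ (n := m - m./2)) /= in K; [|lia|lia].
rewrite big_nat_cond big1 ?add0r in K; last first.
  move=> j /andP [/andP [_ Hj] _]; rewrite /h ifF //.
  apply/negbTE; rewrite -ltnNge; lia.
rewrite big_nat_recr /= in K; last by lia.
rewrite /h /= (_ : (m <= 2 * m)%N) in K; last by lia.
rewrite (_ : (2 * m - m = m)%N) in K; last by lia.
rewrite binSn in K.
set S := \sum_(m - m./2 <= j < m) _.
have ES : \sum_(m - m./2 <= i < m) h (2 * i)%N = S.
  rewrite /S big_nat_cond [RHS]big_nat_cond; apply: eq_bigr => j /andP [/andP [H1 H2] _].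
  rewrite /h ifT; last by lia.
  rewrite -bin_sub; last by lia.
  rewrite (_ : (m.+1 - (2 * j - m) = (2 * m - 2 * j).+1)%N); last by lia.
  by rewrite add1n.
rewrite ES in K.
have Hm1 : (m.+1)%:R != 0 :> rat by rewrite pnatr_eq0.
have Hm2 : ((2 * m).+1)%:R != 0 :> rat by rewrite pnatr_eq0.
have -> : S = - ((m.+1)%:R * ((2 * m).+1)%:R * B (2 * m)) by lra.
have Hm : 0 <= m%:R :> rat by apply: ler0n.
field; apply/andP; split; apply/eqP; lra.
Qed.
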